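(* Let $p>1$ be an integer and let $u^{(p)}$ be the fixed point of the substitution $\varphi_p(L)=L^pS$, $\varphi_p(S)=M$, $\varphi_p(M)=L^{p-1}S$. There is no pair of factors $v,w$ of $u^{(p)}$ whose Parikh vectors satisfy $\Psi(v)-\Psi(w)=(3,-2,-1)$.
   Context: $u^{(p)}=\lim_{n\to\infty}\varphi_p^n(L)$. For a finite word $w$, its Parikh vector is $\Psi(w)=(|w|_L,|w|_S,|w|_M)$, where $|w|_a$ is the number of occurrences of the letter $a$ in $w$. *)

(* Defs.v *)
From HB Require Import structures.
From mathcomp Require Import all_boot all_algebra.
Set Implicit Arguments. Unset Strict Implicit. Unset Printing Implicit Defensive.
Import GRing.Theory.
Local Open Scope ring_scope.

Inductive letter := L | S | M.

Definition letter_eqb (a b : letter) : bool :=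
  match a, b with L, L | S, S | M, M => true | _, _ => false end.
Lemma letter_eqP : Equality.axiom letter_eqb.
Proof. by case; case; constructor. Qed.
HB.instance Definition _ := hasDecEq.Build letter letter_eqP.

Definition phi_letter (p : nat) (a : letter) : seq letter :=
  match a with
  | L => nseq p L ++ [:: S]
  | S => [:: M]
  | M => nseq p.-1 L ++ [:: S]
  end.

Definition phi (p : nat) (w : seq letter) : seq letter :=
  flatten (map (phi_letter p) w).

Definition phi_iter (p n : nat) : seq letter := iter n (phi p) [:: L].

(* The fixed point u^(p) = lim phi_p^n(L), as an infinite word nat -> letter:
   since phi_p(L) starts with L, phi_p^n(L) is a prefix of phi_p^(n+1)(L), and
   |phi_p^n(L)| >= n+1 for p > 1, so the i-th letter of u^(p) is the i-th
   letter of phi_p^(i+1)(L). *)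
Definition u (p : nat) (i : nat) : letter := nth L (phi_iter p i.+1) i.

Definition factor (p : nat) (v : seq letter) : Prop :=
  exists i n : nat, v = [seq u p j | j <- iota i n].

Definition parikh (w : seq letter) : int * int * int :=
  ((count_mem L w)%:Z, (count_mem S w)%:Z, (count_mem M w)%:Z).

(* Main.v *)
Require Import Defs.
From Stdlib Require Import ZArith Lia FMapPositive.
From mathcomp Require Import all_boot all_algebra zify.
Set Bullet Behavior "Strict Subproofs".

Section Checker.
Local Open Scope Z_scope.

Definition form := (Z* Z)%type.
Definition evalf (p:Z) (f:form) := fst f * p + snd f.
Definition fsub (a b:form) : form := (fst a - fst b, snd a - snd b).
Definition gform (c:letter) : form := match c with L => (1,0) | S => (0,0) | M => (1,-1) end.
Definition sigl c := match c with L => S | S => M | M => S end.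
Definition lc c := match c with L => 0 | S => 1 | M => 2 end.

Inductive st := St (dl ds dm : Z) (fv nv fw nw : letter).
Definition st_eqb (a b : st) : bool :=
  match a, b with St a1 a2 a3 a4 a5 a6 a7, St b1 b2 b3 b4 b5 b6 b7 =>
    Z.eqb a1 b1 && Z.eqb a2 b2 && Z.eqb a3 b3 && letter_eqb a4 b4 && letter_eqb a5 b5
    && letter_eqb a6 b6 && letter_eqb a7 b7 end.
Definition key (s:st) : positive :=
  match s with St a1 a2 a3 a4 a5 a6 a7 =>
    Z.to_pos (1 + ((((a1 + 128) * 256 + (a2 + 128)) * 256 + (a3 + 128)) * 81
       + ((lc a4 * 3 + lc a5) * 3 + lc a6) * 3 + lc a7)) end.
Definition bmap := PositiveMap.t (list st).
Definition bucket (s:st) (m:bmap) := match PositiveMap.find (key s) m with Some l => l | None => nil end.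
Definition memb (s:st) (m:bmap) : bool := List.existsb (st_eqb s) (bucket s m).
Definition addb (s:st) (m:bmap) : bmap := PositiveMap.add (key s) (s :: bucket s m) m.
Definition boxlist (m:bmap) : list st := List.flat_map snd (PositiveMap.elements m).

Definition fleT := form -> form -> option bool.
Definition isfalse (o:option bool) := match o with Some false => true | _ => false end.
Definition maybein (fle:fleT) lo x hi := negb (isfalse (fle lo x)) && negb (isfalse (fle x hi)).

Definition rint (fle:fleT) (f' f : letter) : option (form* form) :=
  match f with
  | L => let hi := fsub (gform f') (0,1) in if isfalse (fle (0,0) hi) then None else Some ((0,0), hi)
  | _ => if letter_eqb f (sigl f') then Some (gform f', gform f') else None end.
Definition wint fle f' n' f n : option (form* form) :=
  match rint fle f' f, rint fle n' n with
  | Some (la,ha), Some (lb,hb) => Some (fsub lb ha, fsub hb la)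
  | _, _ => None end.
Definition letters := L :: S :: M :: nil.
Definition EE := 7.
Definition erange := List.map (fun i => Z.of_nat i - EE) (List.seq 0 15).

Definition succs (fle:fleT) (s:st) : list st :=
  match s with St l s' m f'v n'v f'w n'w =>
  List.flat_map (fun fv => List.flat_map (fun nv => List.flat_map (fun fw => List.flat_map (fun nw =>
    match wint fle f'v n'v fv nv, wint fle f'w n'w fw nw with
    | Some (lv,hv), Some (lw,hw) =>
        let tlo := fsub lv hw in let thi := fsub hv lw in
        List.flat_map (fun e => let dl := e - (l+m) - s' in
                 if maybein fle tlo (-(l+m), dl + m) thi then (St dl (l+m) s' fv nv fw nw :: nil) else nil)
          erange
    | _, _ => nil end) letters) letters) letters) letters end.

Definition fle_conc (p:Z) : fleT := fun a b => Some (evalf p a <=? evalf p b).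
Definition fle_sym (p0:Z) : fleT := fun a b =>
  let d := fsub b a in let v := evalf p0 d in
  if (0 <=? fst d) && (0 <=? v) then Some true
  else if (fst d <=? 0) && (v <? 0) then Some false else None.

Record lstate := LS { work : list st; mp : bmap }.
Definition step (fle:fleT) (x:lstate) : lstate :=
  match work x with
  | nil => x
  | s :: w =>
    let '(w', m') := List.fold_left (fun acc t => let '(w0,m0) := acc in
         if memb t m0 then acc else (t :: w0, addb t m0)) (succs fle s) (w, mp x) in
    LS w' m' end.

Definition small10 : list (Z* Z* Z) :=
  (0,0,0)::(1,0,0)::(0,1,0)::(0,0,1)::(2,0,0)::(0,2,0)::(0,0,2)::(1,1,0)::(1,0,1)::(0,1,1)::nil.
Definition basel : list st :=
  List.flat_map (fun a => List.flat_map (fun b => let '(a1,a2,a3) := a in let '(b1,b2,b3) := b in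
    List.flat_map (fun x1 => List.flat_map (fun x2 => List.flat_map (fun x3 => List.map (fun x4 =>
      St (a1-b1) (a2-b2) (a3-b3) x1 x2 x3 x4) letters) letters) letters) letters) small10) small10.
Definition init : lstate :=
  List.fold_left (fun acc t => if memb t (mp acc) then acc else LS (t :: work acc) (addb t (mp acc))) basel (LS nil (PositiveMap.empty _)).
Definition lfp (fle:fleT) (fuel:positive) := mp (Pos.iter (step fle) init fuel).

Definition closedb (fle:fleT) (m:bmap) : bool :=
  List.forallb (fun s => List.forallb (fun t => memb t m) (succs fle s)) (boxlist m).
Definition trimb (fle:fleT) (m:bmap) : bool :=
  List.forallb (fun s => match s with St a b c _ _ _ _ =>
    (if a + b + c =? EE then match fle (2,EE) (a+c, a+b) with Some true => true | _ => false end else true) &&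
    (if a + b + c =? -EE then match fle (a+c, a+b) (-2,-EE) with Some true => true | _ => false end else true) end) (boxlist m).
Definition notargetb (m:bmap) : bool :=
  List.forallb (fun s => match s with St a b c _ _ _ _ => negb ((a =? 3) && (b =? -2) && (c =? -1)) end) (boxlist m).
Definition baseb (m:bmap) : bool := List.forallb (fun s => memb s m) basel.
Definition goodb (fle:fleT) (m:bmap) := closedb fle m && trimb fle m && notargetb m && baseb m.

End Checker.


Section Sound.
Local Open Scope Z_scope.

Definition fle_ok (fle:fleT) (p:Z) := forall a b r, fle a b = Some r -> (evalf p a <=? evalf p b) = r.

Lemma fle_conc_ok p : fle_ok (fle_conc p) p.
Proof. intros a b r H. unfold fle_conc in H. congruence. Qed.

Lemma fle_sym_ok p0 p : p0 <= p -> fle_ok (fle_sym p0) p.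
Proof.
  intros Hp a b r H. unfold fle_sym, fsub, evalf in *. destruct a as [k1 c1], b as [k2 c2]; simpl in *.
  assert (Hm: forall k, 0 <= k -> 0 <= k * (p - p0)) by (intros; apply Z.mul_nonneg_nonneg; lia).
  destruct (0 <=? k2 - k1) eqn:E1; destruct (0 <=? (k2 - k1) * p0 + (c2 - c1)) eqn:E2; simpl in H;
  try (injection H as <-; apply Z.leb_le; apply Z.leb_le in E1; apply Z.leb_le in E2;
       specialize (Hm (k2 - k1) E1); nia).
  all: destruct (k2 - k1 <=? 0) eqn:E3; destruct ((k2 - k1) * p0 + (c2 - c1) <? 0) eqn:E4; simpl in H; try discriminate;
       injection H as <-; apply Z.leb_gt; apply Z.leb_le in E3; apply Z.ltb_lt in E4;
       specialize (Hm (k1 - k2) ltac:(lia)); nia.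
Qed.

Lemma isfalse_ok fle p a b : fle_ok fle p -> evalf p a <= evalf p b -> isfalse (fle a b) = false.
Proof.
  intros Hf H. destruct (fle a b) as [[|]|] eqn:E; try reflexivity.
  apply Hf in E. apply Z.leb_gt in E. lia.
Qed.

Definition gZ p c := evalf p (gform c).
Definition chZ p r c := if r <? gZ p c then L else sigl c.

Lemma rint_ok fle p f' r : fle_ok fle p -> 0 <= r <= gZ p f' ->
  exists lo hi, rint fle f' (chZ p r f') = Some (lo,hi) /\ evalf p lo <= r <= evalf p hi.
Proof.
  intros Hf Hr. unfold chZ. destruct (r <? gZ p f') eqn:E.
  - apply Z.ltb_lt in E. simpl. rewrite (isfalse_ok fle p); auto.
    + exists (0,0), (fsub (gform f') (0,1)). split; [reflexivity|].
      unfold gZ, evalf, fsub in *; simpl in *; lia.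
    + unfold gZ, evalf, fsub in *; simpl in *; lia.
  - apply Z.ltb_ge in E. assert (r = gZ p f') by lia. subst r.
    destruct f'; simpl; eexists; eexists; split; try reflexivity; unfold gZ, evalf, gform in *; simpl in *; lia.
Qed.

Lemma wint_ok fle p f' n' ra rb : fle_ok fle p -> 0 <= ra <= gZ p f' -> 0 <= rb <= gZ p n' ->
  exists lo hi, wint fle f' n' (chZ p ra f') (chZ p rb n') = Some (lo,hi) /\ evalf p lo <= rb - ra <= evalf p hi.
Proof.
  intros Hf Ha Hb. destruct (rint_ok fle p f' ra Hf Ha) as [la [ha [E1 H1]]].
  destruct (rint_ok fle p n' rb Hf Hb) as [lb [hb [E2 H2]]].
  unfold wint. rewrite E1 E2. eexists; eexists; split; [reflexivity|].
  unfold evalf, fsub in *; simpl in *; lia.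
Qed.

Lemma letters_in c : List.In c letters.
Proof. destruct c; simpl; auto. Qed.

Lemma erange_in e : -EE <= e <= EE -> List.In e erange.
Proof.
  intros H. unfold erange. apply List.in_map_iff. exists (Z.to_nat (e + EE)).
  split. - rewrite Z2Nat.id; unfold EE in *; lia.
  - apply List.in_seq. unfold EE in *; lia.
Qed.

Lemma succs_ok fle p l s m f'v n'v f'w n'w ra rb rc rd : fle_ok fle p ->
  0 <= ra <= gZ p f'v -> 0 <= rb <= gZ p n'v -> 0 <= rc <= gZ p f'w -> 0 <= rd <= gZ p n'w ->
  let dl := p* l + (p-1)* m + ((rb - ra) - (rd - rc)) in
  -EE <= dl + (l+m) + s <= EE ->
  List.In (St dl (l+m) s (chZ p ra f'v) (chZ p rb n'v) (chZ p rc f'w) (chZ p rd n'w))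
     (succs fle (St l s m f'v n'v f'w n'w)).
Proof.
  intros Hf Ha Hb Hc Hd dl He.
  destruct (wint_ok fle p f'v n'v ra rb Hf Ha Hb) as [lv [hv [Ev Hv]]].
  destruct (wint_ok fle p f'w n'w rc rd Hf Hc Hd) as [lw [hw [Ew Hw]]].
  unfold succs.
  apply List.in_flat_map; exists (chZ p ra f'v); split; [apply letters_in|].
  apply List.in_flat_map; exists (chZ p rb n'v); split; [apply letters_in|].
  apply List.in_flat_map; exists (chZ p rc f'w); split; [apply letters_in|].
  apply List.in_flat_map; exists (chZ p rd n'w); split; [apply letters_in|].
  rewrite Ev Ew.
  apply List.in_flat_map; exists (dl + (l+m) + s); split; [apply erange_in; exact He|].
  replace (dl + (l + m) + s - (l + m) - s) with dl by ring.
  unfold maybein. rewrite (isfalse_ok fle p); [rewrite (isfalse_ok fle p)|..]; auto; simpl; auto;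
  unfold evalf, fsub, dl in *; simpl in *; nia.
Qed.

Definition Box (m:bmap) (s:st) := memb s m = true.

Lemma st_eqb_eq a b : st_eqb a b = true -> a = b.
Proof.
  destruct a, b; simpl. intros H.
  repeat match goal with H : _ && _ = true |- _ => apply andb_prop in H; destruct H end.
  repeat match goal with H : Z.eqb _ _ = true |- _ => apply Z.eqb_eq in H; subst end.
  repeat match goal with H : letter_eqb ?x ?y = true |- _ => destruct x, y; try discriminate H; clear H end;
  reflexivity.
Qed.

Lemma memb_in s m : memb s m = true -> List.In s (boxlist m).
Proof.
  unfold memb, bucket, boxlist. destruct (PositiveMap.find (key s) m) as [l|] eqn:E; [|discriminate].
  intros H. apply List.existsb_exists in H. destruct H as [x [Hx Hq]]. apply st_eqb_eq in Hq. subst x.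
  apply List.in_flat_map. exists (key s, l). split; [|exact Hx].
  apply PositiveMap.elements_correct. exact E.
Qed.

Lemma closed_ok fle p m : fle_ok fle p -> closedb fle m = true ->
  forall l s mm f'v n'v f'w n'w ra rb rc rd,
  Box m (St l s mm f'v n'v f'w n'w) ->
  0 <= ra <= gZ p f'v -> 0 <= rb <= gZ p n'v -> 0 <= rc <= gZ p f'w -> 0 <= rd <= gZ p n'w ->
  let dl := p* l + (p-1)* mm + ((rb - ra) - (rd - rc)) in
  -EE <= dl + (l+mm) + s <= EE ->
  Box m (St dl (l+mm) s (chZ p ra f'v) (chZ p rb n'v) (chZ p rc f'w) (chZ p rd n'w)).
Proof.
  intros Hf Hc l s mm f'v n'v f'w n'w ra rb rc rd HB Ha Hb Hc' Hd dl He.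
  unfold closedb in Hc. rewrite List.forallb_forall in Hc.
  specialize (Hc _ (memb_in _ _ HB)). rewrite List.forallb_forall in Hc.
  apply Hc. apply succs_ok; auto.
Qed.

Lemma trim_ok fle p m : fle_ok fle p -> trimb fle m = true -> forall a b c x1 x2 x3 x4,
  Box m (St a b c x1 x2 x3 x4) ->
  (a + b + c = EE -> 2* p + EE <= (p+1)* a + b + p* c) /\
  (a + b + c = -EE -> (p+1)* a + b + p* c <= -2* p - EE).
Proof.
  intros Hf Ht a b c x1 x2 x3 x4 HB. unfold trimb in Ht. rewrite List.forallb_forall in Ht.
  specialize (Ht _ (memb_in _ _ HB)). unfold EE in *. simpl in Ht. apply andb_prop in Ht. destruct Ht as [H1 H2].
  split; intros He.
  - replace (a+b+c =? 7) with true in H1 by (symmetry; apply Z.eqb_eq; exact He).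
    destruct (fle (2, 7) (a + c, a + b)) as [[|]|] eqn:E; try discriminate.
    apply Hf in E. apply Z.leb_le in E. unfold evalf in E; cbn [fst snd] in E. nia.
  - replace (a+b+c =? -7) with true in H2 by (symmetry; apply Z.eqb_eq; exact He).
    destruct (fle (a + c, a + b) (-2, -7)) as [[|]|] eqn:E; try discriminate.
    apply Hf in E. apply Z.leb_le in E. unfold evalf in E; cbn [fst snd] in E. nia.
Qed.

Lemma notarget_ok m : notargetb m = true -> forall x1 x2 x3 x4, ~ Box m (St 3 (-2) (-1) x1 x2 x3 x4).
Proof.
  intros Ht x1 x2 x3 x4 HB. unfold notargetb in Ht. rewrite List.forallb_forall in Ht.
  specialize (Ht _ (memb_in _ _ HB)). simpl in Ht. discriminate.
Qed.

Lemma base_ok m : baseb m = true -> forall a1 a2 a3 b1 b2 b3 x1 x2 x3 x4,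
  List.In (a1,a2,a3) small10 -> List.In (b1,b2,b3) small10 ->
  Box m (St (a1-b1) (a2-b2) (a3-b3) x1 x2 x3 x4).
Proof.
  intros Hb a1 a2 a3 b1 b2 b3 x1 x2 x3 x4 Ha Hb'. unfold baseb in Hb. rewrite List.forallb_forall in Hb.
  apply Hb. unfold basel.
  apply List.in_flat_map; exists (a1,a2,a3); split; auto.
  apply List.in_flat_map; exists (b1,b2,b3); split; auto.
  apply List.in_flat_map; exists x1; split; [apply letters_in|].
  apply List.in_flat_map; exists x2; split; [apply letters_in|].
  apply List.in_flat_map; exists x3; split; [apply letters_in|].
  apply List.in_map_iff; exists x4; split; [reflexivity|apply letters_in].
Qed.

End Sound.


Section Word.
Local Open Scope Z_scope.
Variable p : Z.
Hypothesis hp : 2 <= p.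
Variable uu : nat -> letter.
Variables PL PS PM : nat -> Z.
Definition iL c := match c with L => 1 | _ => 0 end.
Definition iS c := match c with S => 1 | _ => 0 end.
Definition iM c := match c with M => 1 | _ => 0 end.
Hypothesis P0 : PL 0 = 0 /\ PS 0 = 0 /\ PM 0 = 0.
Hypothesis Psucc : forall x, PL x.+1 = PL x + iL (uu x) /\ PS x.+1 = PS x + iS (uu x) /\ PM x.+1 = PM x + iM (uu x).
Definition gn (c : letter) : nat := Z.to_nat (gZ p c).
Fixpoint posn (x : nat) : nat := match x with 0%N => 0%N | x'.+1 => (posn x' + gn (uu x') + 1)%N end.
Hypothesis Wdec : forall x r, (r <= gn (uu x))%N ->
   uu (posn x + r)%N = chZ p (Z.of_nat r) (uu x) /\
   PL (posn x + r)%N = p * PL x + (p-1) * PM x + Z.of_nat r /\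
   PS (posn x + r)%N = PL x + PM x /\ PM (posn x + r)%N = PS x.

Lemma gn_val c : Z.of_nat (gn c) = gZ p c.
Proof. unfold gn. rewrite Z2Nat.id; [reflexivity|]. unfold gZ, evalf; destruct c; cbn [fst snd gform]; lia. Qed.

Lemma gn_S c : gn c = 0%N -> c = S.
Proof. intros H. pose proof (gn_val c) as G. rewrite H in G. unfold gZ, evalf in G; destruct c; cbn [fst snd gform] in G; try lia; auto. Qed.

Lemma posn_ell x : Z.of_nat (posn x) = (p+1) * PL x + PS x + p * PM x.
Proof.
  induction x as [|x IH].
  - simpl. destruct P0 as [A [B C]]. rewrite A B C. lia.
  - simpl. destruct (Psucc x) as [A [B C]]. rewrite A B C.
    pose proof (gn_val (uu x)) as G. unfold gZ, evalf in G.
    destruct (uu x); cbn [fst snd gform iL iS iM] in *; lia.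
Qed.

Lemma posn_mono x y : (x <= y)%N -> (posn x + (y - x) <= posn y)%N.
Proof.
  intros H. induction y as [|y IH].
  - assert (x = 0%N) by lia. subst. simpl. lia.
  - destruct (x == y.+1) eqn:E.
    + move/eqP: E => ->. lia.
    + assert (x <= y)%N by (move/negbT: E => E; lia). specialize (IH H0). simpl. lia.
Qed.

Lemma decomp y : exists x r, (r <= gn (uu x))%N /\ y = (posn x + r)%N.
Proof.
  induction y as [|y [x [r [Hr ->]]]].
  - exists 0%N, 0%N. simpl. split; lia.
  - destruct (r < gn (uu x))%N eqn:E.
    + exists x, r.+1. split; lia.
    + exists x.+1, 0%N. split; [lia|]. simpl. move/negbT: E => E. lia.
Qed.

Lemma mono_dec x1 r1 x2 r2 : (r1 <= gn (uu x1))%N -> (r2 <= gn (uu x2))%N ->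
  (posn x1 + r1 <= posn x2 + r2)%N -> (x1 <= x2)%N.
Proof.
  intros H1 H2 H. destruct (x1 <= x2)%N eqn:E; auto.
  move/negbT: E => E. assert (x2.+1 <= x1)%N by lia.
  pose proof (posn_mono _ _ H0). simpl in H3. lia.
Qed.

Lemma ssfree y : uu y = S -> uu y.+1 <> S.
Proof.
  intros Hy. destruct (decomp y) as [x [r [Hr Hy']]].
  destruct (Wdec x r Hr) as [U _]. rewrite -Hy' Hy in U.
  unfold chZ in U. destruct (Z.of_nat r <? gZ p (uu x)) eqn:E; [discriminate|].
  apply Z.ltb_ge in E. rewrite -gn_val in E. assert (r = gn (uu x)) by lia.
  assert (y.+1 = posn x.+1 + 0)%N by (simpl; lia).
  destruct (Wdec x.+1 0%N ltac:(lia)) as [U2 _]. rewrite -H0 in U2. rewrite U2.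
  unfold chZ. destruct (Z.of_nat 0 <? gZ p (uu x.+1)) eqn:E2; [discriminate|].
  apply Z.ltb_ge in E2. rewrite -gn_val in E2. assert (gn (uu x.+1) = 0%N) by lia.
  apply gn_S in H1. rewrite H1. simpl. discriminate.
Qed.

Lemma shrink a' ra b' rb : (ra <= gn (uu a'))%N -> (rb <= gn (uu b'))%N ->
  (posn a' + ra <= posn b' + rb)%N ->
  (b' - a' <= (posn b' + rb) - (posn a' + ra))%N /\
  ((3 <= (posn b' + rb) - (posn a' + ra))%N -> (b' - a' < (posn b' + rb) - (posn a' + ra))%N).
Proof.
  intros Ha Hb H. pose proof (mono_dec _ _ _ _ Ha Hb H) as Hab.
  destruct (a' == b') eqn:E.
  - move/eqP: E => E. subst. lia.
  - move/negbT: E => E. assert (a'.+1 <= b')%N by lia.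
    pose proof (posn_mono _ _ H0). simpl in H1.
    split; [lia|]. intros H3.
    destruct (a'.+3 <= b')%N eqn:E3; [|lia].
    pose proof (posn_mono _ _ E3). simpl in H2.
    destruct (gn (uu a'.+1)) eqn:G1.
    + destruct (gn (uu a'.+2)) eqn:G2.
      * apply gn_S in G1, G2. exfalso. exact (ssfree _ G1 G2).
      * lia.
    + lia.
Qed.


Lemma Psum x : PL x + PS x + PM x = Z.of_nat x.
Proof.
  induction x as [|x IH].
  - destruct P0 as [A [B C]]. rewrite A B C. reflexivity.
  - destruct (Psucc x) as [A [B C]]. rewrite A B C. destruct (uu x); simpl; lia.
Qed.

Lemma gn_le c : (Z.of_nat (gn c) <= p).
Proof. rewrite gn_val. unfold gZ, evalf; destruct c; cbn [fst snd gform]; lia. Qed.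

Lemma window_small a k : (k <= 2)%N ->
  List.In (PL (a+k)%N - PL a, PS (a+k)%N - PS a, PM (a+k)%N - PM a) small10.
Proof.
  intros Hk. destruct k as [|[|[|k]]]; try lia.
  - rewrite addn0. replace (PL a - PL a) with 0 by ring. replace (PS a - PS a) with 0 by ring.
    replace (PM a - PM a) with 0 by ring. simpl; auto.
  - rewrite addn1. destruct (Psucc a) as [A [B C]]. rewrite A B C.
    replace (PL a + iL (uu a) - PL a) with (iL (uu a)) by ring.
    replace (PS a + iS (uu a) - PS a) with (iS (uu a)) by ring.
    replace (PM a + iM (uu a) - PM a) with (iM (uu a)) by ring.
    destruct (uu a); simpl; tauto.
  - replace (a + 2)%N with (a.+1).+1 by lia.
    destruct (Psucc a.+1) as [A [B C]]. rewrite A B C.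
    destruct (Psucc a) as [A' [B' C']]. rewrite A' B' C'.
    replace (PL a + iL (uu a) + iL (uu a.+1) - PL a) with (iL (uu a) + iL (uu a.+1)) by ring.
    replace (PS a + iS (uu a) + iS (uu a.+1) - PS a) with (iS (uu a) + iS (uu a.+1)) by ring.
    replace (PM a + iM (uu a) + iM (uu a.+1) - PM a) with (iM (uu a) + iM (uu a.+1)) by ring.
    destruct (uu a), (uu a.+1); simpl; tauto.
Qed.

Definition stt (a b c d : nat) :=
  St (PL b - PL a - PL d + PL c) (PS b - PS a - PS d + PS c) (PM b - PM a - PM d + PM c) (uu a) (uu b) (uu c) (uu d).

Lemma base_case m a b c d : baseb m = true -> (a <= b)%N -> (c <= d)%N -> (b - a <= 2)%N -> (d - c <= 2)%N ->
  Box m (stt a b c d).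
Proof.
  intros Hb Hab Hcd H1 H2. unfold stt.
  replace b with (a + (b - a))%N by lia. replace d with (c + (d - c))%N by lia.
  replace (PL (a + (b - a))%N - PL a - PL (c + (d - c))%N + PL c) with
     ((PL (a + (b - a))%N - PL a) - (PL (c + (d - c))%N - PL c)) by ring.
  replace (PS (a + (b - a))%N - PS a - PS (c + (d - c))%N + PS c) with
     ((PS (a + (b - a))%N - PS a) - (PS (c + (d - c))%N - PS c)) by ring.
  replace (PM (a + (b - a))%N - PM a - PM (c + (d - c))%N + PM c) with
     ((PM (a + (b - a))%N - PM a) - (PM (c + (d - c))%N - PM c)) by ring.
  apply base_ok; auto; apply window_small; lia.
Qed.

Lemma Wfull x r : (r <= gn (uu x))%N ->
   uu (posn x + r)%N = chZ p (Z.of_nat r) (uu x) /\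
   PL (posn x + r)%N = p * PL x + (p-1) * PM x + Z.of_nat r /\
   PS (posn x + r)%N = PL x + PM x /\ PM (posn x + r)%N = PS x.
Proof. apply Wdec. Qed.

Lemma ell_stt a b c d : (p+1) * (PL b - PL a - PL d + PL c) + (PS b - PS a - PS d + PS c) + p * (PM b - PM a - PM d + PM c)
  = Z.of_nat (posn b) - Z.of_nat (posn a) - Z.of_nat (posn d) + Z.of_nat (posn c).
Proof. rewrite !posn_ell. ring. Qed.

Lemma sum_stt a b c d : (PL b - PL a - PL d + PL c) + (PS b - PS a - PS d + PS c) + (PM b - PM a - PM d + PM c)
  = Z.of_nat b - Z.of_nat a - Z.of_nat d + Z.of_nat c.
Proof. rewrite -!Psum. ring. Qed.

Theorem invariant m fle : fle_ok fle p -> closedb fle m = true -> trimb fle m = true -> baseb m = true ->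
 forall n a b c d, (a <= b)%N -> (c <= d)%N -> ((b - a) + (d - c) <= n)%N ->
 -EE <= Z.of_nat b - Z.of_nat a - (Z.of_nat d - Z.of_nat c) <= EE ->
 Box m (stt a b c d).
Proof.
  intros Hf Hc Ht Hb n. induction n as [|n IH]; intros a b c d Hab Hcd Hn He.
  - apply base_case; auto; lia.
  - destruct ((b - a <= 2)%N && (d - c <= 2)%N) eqn:Esmall.
    { apply base_case; auto; apply andb_prop in Esmall; destruct Esmall; auto. }
    destruct (decomp a) as [a' [ra [Hra ->]]].
    destruct (decomp b) as [b' [rb [Hrb ->]]].
    destruct (decomp c) as [c' [rc [Hrc ->]]].
    destruct (decomp d) as [d' [rd [Hrd ->]]].
    pose proof (shrink _ _ _ _ Hra Hrb Hab) as [S1 S2].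
    pose proof (shrink _ _ _ _ Hrc Hrd Hcd) as [S3 S4].
    pose proof (mono_dec _ _ _ _ Hra Hrb Hab) as Mab.
    pose proof (mono_dec _ _ _ _ Hrc Hrd Hcd) as Mcd.
    assert (Hn' : ((b' - a') + (d' - c') <= n)%N).
    { move/negbT: Esmall. rewrite negb_and. move/orP => [H|H].
      - specialize (S2 ltac:(lia)). lia.
      - specialize (S4 ltac:(lia)). lia. }
    pose proof (Wfull a' ra Hra) as [Ua [La [Sa Ma]]].
    pose proof (Wfull b' rb Hrb) as [Ub [Lb [Sb Mb]]].
    pose proof (Wfull c' rc Hrc) as [Uc [Lc [Sc Mc]]].
    pose proof (Wfull d' rd Hrd) as [Ud [Ld [Sd Md]]].
    pose proof (gn_le (uu a')) as Ga. pose proof (gn_le (uu d')) as Gd.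
    pose proof (gn_le (uu b')) as Gb. pose proof (gn_le (uu c')) as Gc.
    destruct (Z_le_gt_dec (Z.of_nat b' - Z.of_nat a' - (Z.of_nat d' - Z.of_nat c')) EE) as [Hup|Hup];
    [destruct (Z_le_gt_dec (-EE) (Z.of_nat b' - Z.of_nat a' - (Z.of_nat d' - Z.of_nat c'))) as [Hlo|Hlo]|].
    +
      specialize (IH a' b' c' d' Mab Mcd Hn' (conj Hlo Hup)).
      unfold stt in IH |- *.
      pose proof (closed_ok fle p m Hf Hc _ _ _ _ _ _ _ (Z.of_nat ra) (Z.of_nat rb) (Z.of_nat rc) (Z.of_nat rd) IH) as K.
      rewrite -!gn_val in K.
      specialize (K ltac:(lia) ltac:(lia) ltac:(lia) ltac:(lia)).
      cbv zeta in K.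
      rewrite Ua Ub Uc Ud La Lb Lc Ld Sa Sb Sc Sd Ma Mb Mc Md.
      match type of K with ?P -> Box m (St ?x ?y ?z _ _ _ _) =>
        replace (p * PL b' + (p - 1) * PM b' + Z.of_nat rb - (p * PL a' + (p - 1) * PM a' + Z.of_nat ra) -
                 (p * PL d' + (p - 1) * PM d' + Z.of_nat rd) + (p * PL c' + (p - 1) * PM c' + Z.of_nat rc)) with x by ring;
        replace (PL b' + PM b' - (PL a' + PM a') - (PL d' + PM d') + (PL c' + PM c')) with y by ring;
        replace (PS b' - PS a' - PS d' + PS c') with z by reflexivity end.
      apply K.
      pose proof (sum_stt (posn a' + ra) (posn b' + rb) (posn c' + rc) (posn d' + rd)) as SS.
      rewrite La Lb Lc Ld Sa Sb Sc Sd Ma Mb Mc Md in SS.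
      lia.
    +
      exfalso.
      set (mm := (c' + (b' - a') + 7)%N).
      assert (Hlt : (mm < d')%N) by (unfold EE in Hlo; subst mm; lia).
      specialize (IH a' b' c' mm Mab ltac:(subst mm; lia) ltac:(subst mm; lia) ltac:(unfold EE; subst mm; lia)).
      unfold stt in IH.
      pose proof (trim_ok fle p m Hf Ht _ _ _ _ _ _ _ IH) as [_ T].
      rewrite sum_stt ell_stt in T.
      specialize (T ltac:(unfold EE; subst mm; lia)).
      pose proof (posn_mono mm d' ltac:(lia)) as PM1.
      clear -T PM1 He Hra Hrb Hrc Hrd Ga Gb Gc Gd Hlt.
      unfold EE in *. lia.
    +
      exfalso.
      set (mm := (a' + (d' - c') + 7)%N).
      assert (Hlt : (mm < b')%N) by (unfold EE in Hup; subst mm; lia).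
      specialize (IH a' mm c' d' ltac:(subst mm; lia) Mcd ltac:(subst mm; lia) ltac:(unfold EE; subst mm; lia)).
      unfold stt in IH.
      pose proof (trim_ok fle p m Hf Ht _ _ _ _ _ _ _ IH) as [T _].
      rewrite sum_stt ell_stt in T.
      specialize (T ltac:(unfold EE; subst mm; lia)).
      pose proof (posn_mono mm b' ltac:(lia)) as PM1.
      clear -T PM1 He Hra Hrb Hrc Hrd Ga Gb Gc Gd Hlt.
      unfold EE in *. lia.
Qed.

End Word.



Section Fix.
Variable p : nat.
Hypothesis hp : (1 < p)%N.

Lemma phi_cat w1 w2 : phi p (w1 ++ w2) = phi p w1 ++ phi p w2.
Proof. by rewrite /phi map_cat flatten_cat. Qed.

Lemma phi_cons x w : phi p (x :: w) = phi_letter p x ++ phi p w.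
Proof. by []. Qed.

Lemma size_phi_letter x : size (phi_letter p x) = (gn (Z.of_nat p) x).+1.
Proof.
  case: x; rewrite /phi_letter ?size_cat ?size_nseq /gn /gZ /evalf; cbn [fst snd gform size]; lia.
Qed.

Lemma size_phi_ge w : (size w <= size (phi p w))%N.
Proof.
  elim: w => [|x w IH] //=. rewrite phi_cons size_cat size_phi_letter. lia.
Qed.

Lemma iter_prefix n m : (n <= m)%N -> exists t, phi_iter p m = phi_iter p n ++ t.
Proof.
  move=> H. have Hstep : forall k, exists t, phi_iter p k.+1 = phi_iter p k ++ t.
  { elim=> [|k [t IH]].
    - exists (nseq p.-1 L ++ [:: S]). rewrite /phi_iter /= /phi /= cats0.
      by case: (p) hp => [|q].
    - exists (phi p t). change (phi p (phi_iter p k.+1) = phi_iter p k.+1 ++ phi p t).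
      by rewrite {1}IH phi_cat. }
  elim: m H => [|m IH] H.
  - have -> : n = 0%N by lia. by exists [::]; rewrite cats0.
  - case: (ltnP n m.+1) => [Hlt|Hge].
    + have [t1 E1] := IH ltac:(lia). have [t2 E2] := Hstep m.
      exists (t1 ++ t2). by rewrite E2 E1 catA.
    + have -> : n = m.+1 by lia. by exists [::]; rewrite cats0.
Qed.

Lemma size_iter n : (n < size (phi_iter p n))%N.
Proof.
  elim: n => [|n IH]; first by [].
  have [t0 E0] := iter_prefix 0 n (leq0n n).
  have HL : size (phi p [:: L]) = p.+1 by rewrite /phi /= cats0 size_cat size_nseq addn1.
  change (n.+1 < size (phi p (phi_iter p n)))%N.
  rewrite E0 phi_cat size_cat. change (phi_iter p 0) with [:: L]. rewrite HL.
  have := size_phi_ge t0. rewrite E0 size_cat in IH. change (phi_iter p 0) with [:: L] in IH.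
  simpl in IH. lia.
Qed.

Lemma nth_u N i : (i < size (phi_iter p N))%N -> u p i = nth L (phi_iter p N) i.
Proof.
  move=> Hi. rewrite /u.
  have Hi2 : (i < size (phi_iter p i.+1))%N by have := size_iter i.+1; lia.
  case: (leqP N i.+1) => H.
  - have [t E] := iter_prefix N i.+1 H. by rewrite E nth_cat Hi.
  - have [t E] := iter_prefix i.+1 N (ltnW H). by rewrite E nth_cat Hi2.
Qed.

Definition UU x := [seq u p i | i <- iota 0 x].

Lemma UU_take N x : (x <= size (phi_iter p N))%N -> UU x = take x (phi_iter p N).
Proof.
  move=> H. apply: (@eq_from_nth _ L).
  - by rewrite /UU size_map size_iota size_take; case: ltnP => //; lia.
  - move=> i. rewrite /UU size_map size_iota => Hi.
    rewrite (nth_map 0%N) ?size_iota // nth_iota // add0n nth_take //.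
    apply: nth_u. lia.
Qed.

Lemma UU_prefix x y : (x <= y)%N -> UU x = take x (UU y).
Proof.
  move=> H. rewrite /UU -(subnKC H) iotaD map_cat take_size_cat //.
  by rewrite size_map size_iota.
Qed.

Lemma UU_S x : UU x.+1 = UU x ++ [:: u p x].
Proof. by rewrite /UU -addn1 iotaD map_cat. Qed.

Lemma u_UU i k : (i < k)%N -> u p i = nth L (UU k) i.
Proof. move=> H. by rewrite /UU (nth_map 0%N) ?size_iota // nth_iota. Qed.

Definition uuZ := u p.
Definition pZ := Z.of_nat p.

Lemma posn_size x : posn pZ uuZ x = size (phi p (UU x)).
Proof.
  elim: x => [|x IH] //. rewrite UU_S phi_cat size_cat -IH.
  have -> : phi p [:: u p x] = phi_letter p (u p x) by rewrite /phi /= cats0.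
  rewrite size_phi_letter /=. rewrite /uuZ /pZ. lia.
Qed.

Lemma phi_UU x : phi p (UU x) = UU (posn pZ uuZ x).
Proof.
  set N := (posn pZ uuZ x + x)%N.
  have H1 : (x <= size (phi_iter p N))%N by have := size_iter N; lia.
  have H2 : (posn pZ uuZ x <= size (phi_iter p N.+1))%N by have := size_iter N.+1; lia.
  rewrite (UU_take N.+1 _ H2) posn_size (UU_take N x H1).
  have E : phi_iter p N.+1 = phi p (take x (phi_iter p N)) ++ phi p (drop x (phi_iter p N)).
  { change (phi p (phi_iter p N) = phi p (take x (phi_iter p N)) ++ phi p (drop x (phi_iter p N))).
    by rewrite -phi_cat cat_take_drop. }
  by rewrite E take_size_cat.
Qed.

Local Open Scope Z_scope.
Lemma gn_pZ c : gn pZ c = match c with L => p | S => 0%N | M => p.-1 end.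
Proof. rewrite /gn /gZ /evalf /pZ; case: c; cbn [fst snd gform]; lia. Qed.

Lemma letter_props c r : (r <= gn pZ c)%N ->
  nth L (phi_letter p c) r = chZ pZ (Z.of_nat r) c /\ take r (phi_letter p c) = nseq r L.
Proof.
  rewrite gn_pZ /chZ /gZ /evalf /pZ. case: c => /= Hr.
  - rewrite nth_cat take_cat size_nseq.
    case: (ltnP r p) => H.
    + rewrite nth_nseq H take_nseq; last by lia.
      have -> : Z.ltb (Z.of_nat r) (Z.add (Z.mul 1 (Z.of_nat p)) 0) = true by apply Z.ltb_lt; lia. by [].
    + have -> : r = p by lia. rewrite subnn /= ?take0 ?cats0.
      have -> : Z.ltb (Z.of_nat p) (Z.add (Z.mul 1 (Z.of_nat p)) 0) = false by apply Z.ltb_ge; lia. by [].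
  - have -> : r = 0%N by lia. by [].
  - rewrite nth_cat take_cat size_nseq.
    case: (ltnP r p.-1) => H.
    + rewrite nth_nseq H take_nseq; last by lia.
      have -> : Z.ltb (Z.of_nat r) (Z.add (Z.mul 1 (Z.of_nat p)) (-1)) = true by apply Z.ltb_lt; lia. by [].
    + have -> : r = p.-1 by lia. rewrite subnn /= ?take0 ?cats0.
      have -> : Z.ltb (Z.of_nat p.-1) (Z.add (Z.mul 1 (Z.of_nat p)) (-1)) = false by apply Z.ltb_ge; lia. by [].
Qed.

Lemma count_phi w :
  count_mem L (phi p w) = (p * count_mem L w + p.-1 * count_mem M w)%N /\
  count_mem S (phi p w) = (count_mem L w + count_mem M w)%N /\
  count_mem M (phi p w) = count_mem S w.
Proof.
  elim: w => [|c w [IH1 [IH2 IH3]]]; first by rewrite /phi /=; lia.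
  rewrite phi_cons !count_cat IH1 IH2 IH3 /=.
  case: c => /=; rewrite ?count_cat ?count_nseq /=; lia.
Qed.

Definition PLf x := Z.of_nat (count_mem L (UU x)).
Definition PSf x := Z.of_nat (count_mem S (UU x)).
Definition PMf x := Z.of_nat (count_mem M (UU x)).

Lemma P0f : PLf 0 = 0 /\ PSf 0 = 0 /\ PMf 0 = 0.
Proof. by []. Qed.

Lemma Psuccf x : (PLf x.+1 = PLf x + iL (uuZ x) /\ PSf x.+1 = PSf x + iS (uuZ x) /\ PMf x.+1 = PMf x + iM (uuZ x)).
Proof.
  rewrite /PLf /PSf /PMf UU_S !count_cat /uuZ. case: (u p x) => /=; lia.
Qed.

Lemma Wdecf x r : (r <= gn pZ (uuZ x))%N ->
   uuZ (posn pZ uuZ x + r)%N = chZ pZ (Z.of_nat r) (uuZ x) /\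
   (PLf (posn pZ uuZ x + r)%N = pZ * PLf x + (pZ-1) * PMf x + Z.of_nat r /\
   PSf (posn pZ uuZ x + r)%N = PLf x + PMf x /\ PMf (posn pZ uuZ x + r)%N = PSf x).
Proof.
  move=> Hr. have [Hn Ht] := letter_props _ _ Hr.
  have EW : UU (posn pZ uuZ x.+1) = phi p (UU x) ++ phi_letter p (uuZ x).
  { rewrite -phi_UU UU_S phi_cat. by rewrite /phi /= cats0. }
  have Hsz : size (phi p (UU x)) = posn pZ uuZ x by rewrite posn_size.
  have Hlt : (posn pZ uuZ x + r < posn pZ uuZ x.+1)%N by rewrite /=; lia.
  split.
  - rewrite /uuZ (u_UU _ _ Hlt) -/uuZ EW nth_cat Hsz.
    have -> : (posn pZ uuZ x + r < posn pZ uuZ x)%N = false by lia.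
    by rewrite addKn.
  - have EU : UU (posn pZ uuZ x + r) = phi p (UU x) ++ nseq r L.
    { rewrite (UU_prefix _ _ (ltnW Hlt)) EW take_cat Hsz.
      have -> : (posn pZ uuZ x + r < posn pZ uuZ x)%N = false by lia.
      by rewrite addKn Ht. }
    have [C1 [C2 C3]] := count_phi (UU x).
    rewrite /PLf /PSf /PMf EU !count_cat C1 C2 C3 !count_nseq /= /pZ. lia.
Qed.

End Fix.


Definition box2 := lfp (fle_conc 2) 100000.
Definition box3 := lfp (fle_conc 3) 100000.
Definition boxs := lfp (fle_sym 4) 100000.
Lemma good2 : goodb (fle_conc 2) box2 = true. Proof. vm_compute. reflexivity. Qed.
Lemma good3 : goodb (fle_conc 3) box3 = true. Proof. vm_compute. reflexivity. Qed.
Lemma goods : goodb (fle_sym 4) boxs = true. Proof. vm_compute. reflexivity. Qed.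

Section Fin.
Local Open Scope Z_scope.

Lemma box_exists (p:nat) : (1 < p)%N -> exists fle m, fle_ok fle (Z.of_nat p) /\ goodb fle m = true.
Proof.
  move=> hp. case: (ltnP p 4) => H.
  - case: (p =P 2%N) => [->|N2].
    + exists (fle_conc 2), box2. split; [apply fle_conc_ok | apply good2].
    + have -> : p = 3%N by lia. exists (fle_conc 3), box3. split; [apply fle_conc_ok | apply good3].
  - exists (fle_sym 4), boxs. split; [apply fle_sym_ok; lia | apply goods].
Qed.

Lemma UU_cat p i n : UU p (i + n) = UU p i ++ [seq u p k | k <- iota i n].
Proof. by rewrite /UU iotaD map_cat add0n. Qed.

Lemma no_target p (hp : (1 < p)%N) i j n :
  ~ (count_mem L [seq u p k | k <- iota i n] = count_mem L [seq u p k | k <- iota j n] + 3 /\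
     count_mem S [seq u p k | k <- iota j n] = count_mem S [seq u p k | k <- iota i n] + 2 /\
     count_mem M [seq u p k | k <- iota j n] = count_mem M [seq u p k | k <- iota i n] + 1)%N.
Proof.
  move=> [H1 [H2 H3]].
  have [fle [m [Hf Hg]]] := box_exists p hp.
  move: Hg. rewrite /goodb. move/andP => [/andP [/andP [Hc Ht] Hn] Hb].
  have Hp2 : 2 <= Z.of_nat p by lia.
  have K := invariant (Z.of_nat p) Hp2 (uuZ p) (PLf p) (PSf p) (PMf p) (P0f p) (Psuccf p hp) (Wdecf p hp)
     m fle Hf Hc Ht Hb ((i + n - i) + (j + n - j))%N i (i + n)%N j (j + n)%N ltac:(lia) ltac:(lia) ltac:(lia)
     ltac:(unfold EE; lia).
  unfold stt in K.
  rewrite /PLf /PSf /PMf !UU_cat !count_cat in K.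
  replace (Z.of_nat (count_mem L (UU p i) + count_mem L [seq u p k | k <- iota i n]) -
        Z.of_nat (count_mem L (UU p i)) -
        Z.of_nat (count_mem L (UU p j) + count_mem L [seq u p k | k <- iota j n]) +
        Z.of_nat (count_mem L (UU p j))) with 3 in K by lia.
  replace (Z.of_nat (count_mem S (UU p i) + count_mem S [seq u p k | k <- iota i n]) -
        Z.of_nat (count_mem S (UU p i)) -
        Z.of_nat (count_mem S (UU p j) + count_mem S [seq u p k | k <- iota j n]) +
        Z.of_nat (count_mem S (UU p j))) with (-2) in K by lia.
  replace (Z.of_nat (count_mem M (UU p i) + count_mem M [seq u p k | k <- iota i n]) -
        Z.of_nat (count_mem M (UU p i)) -
        Z.of_nat (count_mem M (UU p j) + count_mem M [seq u p k | k <- iota j n]) +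
        Z.of_nat (count_mem M (UU p j))) with (-1) in K by lia.
  exact (notarget_ok m Hn _ _ _ _ K).
Qed.

End Fin.

Lemma size_count3 (w : seq letter) : size w = (count_mem L w + count_mem S w + count_mem M w)%N.
Proof. elim: w => [|c w IH] //=. rewrite IH. case: c => /=; lia. Qed.

Import GRing.Theory.
Local Open Scope ring_scope.

Theorem proposition8p2 (p : nat) (hp : (1 < p)%N) :
  ~ exists v w : seq letter,
      [/\ factor p v, factor p w &
          ((parikh v).1.1 - (parikh w).1.1,
           (parikh v).1.2 - (parikh w).1.2,
           (parikh v).2 - (parikh w).2) = (3%:Z, - 2%:Z, - 1%:Z)].
Proof.
  move=> [v [w [[i [n Hv]] [j [n' Hw]] Heq]]].
  move: Heq. rewrite /parikh. case=> H1 H2 H3. cbn [fst snd] in H1, H2, H3.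
  have {}H1 : ((count_mem L v)%:Z - (count_mem L w)%:Z = 3%:Z :> int) by exact H1.
  have {}H2 : ((count_mem S v)%:Z - (count_mem S w)%:Z = - 2%:Z :> int) by exact H2.
  have {}H3 : ((count_mem M v)%:Z - (count_mem M w)%:Z = - 1%:Z :> int) by exact H3.
  have Sv := size_count3 v. have Sw := size_count3 w.
  have En : n = n'.
  { have : size v = n by rewrite Hv size_map size_iota.
    have : size w = n' by rewrite Hw size_map size_iota. lia. }
  subst n'.
  apply: (no_target p hp i j n). rewrite -Hv -Hw. lia.
Qed.
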